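(* (a) For every finite abelian group $G$, every rate $k/l$ achievable by a $(k,l)$ fractional network code over $G$ on $\mathcal{S}_3$ or on $\mathcal{S}_3'$ satisfies $k/l\le 2/3$. (b) Over every finite field $F$, both the capacity and the linear coding capacity of $\mathcal{S}_3$ and of $\mathcal{S}_3'$ equal $2/3$. (Note that every source-terminal pair in these networks has min-cut at least $1$.)
   Context: The sum-network $\mathcal{S}_3$ has sources $s_1,s_2,s_3$, terminals $t_1,t_2,t_3$, intermediate nodes $u_1,v_1,u_2,v_2$, and the twelve edges $(s_1,u_1),(s_3,u_1),(u_1,v_1),(v_1,t_1),(v_1,t_3),(s_2,u_2),(s_3,u_2),(u_2,v_2),(v_2,t_2),(v_2,t_3),(s_2,t_1),(s_1,t_2)$. The network $\mathcal{S}_3'$ is obtained from $\mathcal{S}_3$ by adding an edge $(s_1,t_1)$, and replacing the edge $(s_2,t_1)$ by a new node $u_3$ with edges $(s_2,u_3),(u_3,t_1)$ and an additional edge $(s_1,u_3)$. A $(k,l)$ fractional network code over alphabet $A$: each source $s_i$ holds $X_i\in A^k$ and sends on each outgoing edge a function $A^k\to A^l$ of $X_i$; each edge whose tail $v$ is not a source carries a function $A^{l|In(v)|}\to A^l$ of the vectors on the incoming edges of $v$; each terminal applies a decoding function $A^{l|In(t)|}\to A^k$. It is a solution if every terminal outputs $X_1+X_2+X_3$ (componentwise sum) for all messages. Rate $k/l$ is achievable if a $(k,l)$ fractional solution exists; the capacity is the supremum of achievable rates; for a field $F$, a code is linear if all functions are $F$-linear and the linear coding capacity is the supremum of rates of linear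 solutions. *)

(* Defs.v *)
From HB Require Import structures.
From mathcomp Require Import all_boot all_order all_algebra.
Set Implicit Arguments. Unset Strict Implicit. Unset Printing Implicit Defensive.
Import Order.TTheory GRing.Theory Num.Theory.
Local Open Scope ring_scope.

Record network := Network {
  edges : seq (nat * nat);
  sources : seq nat;
  terminals : seq nat }.

Definition edge (N : network) := 'I_(size (edges N)).
Definition tail (N : network) (e : edge N) : nat := (nth (0, 0)%N (edges N) e).1.
Definition head (N : network) (e : edge N) : nat := (nth (0, 0)%N (edges N) e).2.
Definition src (N : network) (i : 'I_(size (sources N))) : nat := nth 0%N (sources N) i.
Definition term (N : network) (j : 'I_(size (terminals N))) : nat := nth 0%N (terminals N) j.

(* Node numbering: s1=0 s2=1 s3=2 t1=3 t2=4 t3=5 u1=6 v1=7 u2=8 v2=9 u3=10 *)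
Definition S3 : network := Network
  [:: (0,6); (2,6); (6,7); (7,3); (7,5);
      (1,8); (2,8); (8,9); (9,4); (9,5);
      (1,3); (0,4)]%N
  [:: 0; 1; 2]%N [:: 3; 4; 5]%N.

(* S3': add (s1,t1); replace (s2,t1) by node u3 with (s2,u3),(u3,t1),(s1,u3). *)
Definition S3' : network := Network
  [:: (0,6); (2,6); (6,7); (7,3); (7,5);
      (1,8); (2,8); (8,9); (9,4); (9,5);
      (0,4); (0,3); (1,10); (10,3); (0,10)]%N
  [:: 0; 1; 2]%N [:: 3; 4; 5]%N.

(* The vector of values on the incoming edges of node v (other coordinates
   set to 0): a function of it is exactly a function A^{l|In(v)|} -> ... *)
Definition in_vals (N : network) (A : zmodType) (l : nat) (v : nat)
  (y : edge N -> 'rV[A]_l) : {ffun edge N -> 'rV[A]_l} :=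
  [ffun e => if head e == v then y e else 0].

Record frac_code (N : network) (A : zmodType) (k l : nat) := FracCode {
  (* used on edges whose tail is a source: function of that source's message *)
  enc : edge N -> 'rV[A]_k -> 'rV[A]_l;
  (* used on edges whose tail is not a source: function of incoming edges *)
  fn : edge N -> {ffun edge N -> 'rV[A]_l} -> 'rV[A]_l;
  dec : 'I_(size (terminals N)) -> {ffun edge N -> 'rV[A]_l} -> 'rV[A]_k }.

Definition messages (N : network) (A : zmodType) (k : nat) :=
  'I_(size (sources N)) -> 'rV[A]_k.

(* The code is a solution: the (unique, the network being acyclic) edge
   values y X e consistent with the local functions make every terminal
   output the sum of all source messages, for all messages X. *)
Definition is_solution (N : network) (A : zmodType) (k l : nat)
  (c : frac_code N A k l) : Prop :=
  exists y : messages N A k -> edge N -> 'rV[A]_l,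
  forall X : messages N A k,
    (forall (e : edge N) (i : 'I_(size (sources N))),
        tail e = src i -> y X e = enc c e (X i)) /\
    (forall e : edge N, tail e \notin sources N ->
        y X e = fn c e (in_vals (tail e) (y X))) /\
    (forall j : 'I_(size (terminals N)),
        dec c j (in_vals (term j) (y X)) = \sum_i X i).

Definition is_linear_map (F : fieldType) (U V : lmodType F) (f : U -> V) :=
  forall (a : F) (x y : U), f (a *: x + y) = a *: f x + f y.

Definition is_linear_code (N : network) (F : fieldType) (k l : nat)
  (c : frac_code N F k l) : Prop :=
  (forall e, is_linear_map (enc c e)) /\
  (forall e, is_linear_map (fn c e)) /\
  (forall j, is_linear_map (dec c j)).

Definition achievable (N : network) (A : zmodType) (k l : nat) : Prop :=
  exists c : frac_code N A k l, is_solution c.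

Definition linearly_achievable (N : network) (F : fieldType) (k l : nat) : Prop :=
  exists c : frac_code N F k l, is_linear_code c /\ is_solution c.

Definition is_sup_rate (P : nat -> nat -> Prop) (c : rat) : Prop :=
  (forall k l : nat, (0 < l)%N -> P k l -> k%:R / l%:R <= c) /\
  (forall d : rat, (forall k l : nat, (0 < l)%N -> P k l -> k%:R / l%:R <= d) ->
     c <= d).

(* Main.v *)
Require Import Defs.
From HB Require Import structures.
From mathcomp Require Import all_boot all_order all_algebra.
From mathcomp Require Import finfield.
Import Order.TTheory GRing.Theory Num.Theory.
Local Open Scope ring_scope.

Definition i0 : 'I_3 := @Ordinal 3 0 isT.
Definition i1 : 'I_3 := @Ordinal 3 1 isT.
Definition i2 : 'I_3 := @Ordinal 3 2 isT.

Lemma sum3 (V : zmodType) (f : 'I_3 -> V) : \sum_i f i = f i0 + f i1 + f i2.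
Proof.
rewrite !big_ord_recl big_ord0 addr0 addrA.
by congr (f _ + f _ + f _); apply: val_inj.
Qed.

Definition mk3 {T : Type} (a b c : T) : 'I_3 -> T :=
  fun i => if val i == 0%N then a else if val i == 1%N then b else c.

Lemma core (G : finZmodType) k l (A B : ('I_3 -> 'rV[G]_k) -> 'rV[G]_l) :
 (1 < #|G|)%N ->
 (forall X X', X i0 = X' i0 -> X i2 = X' i2 -> A X = A X') ->
 (forall X X', X i1 = X' i1 -> X i2 = X' i2 -> B X = B X') ->
 (forall X X', A X = A X' -> B X = B X' -> \sum_i X i = \sum_i X' i) ->
 (forall X X', B X = B X' -> X i0 = X' i0 -> \sum_i X i = \sum_i X' i) ->
 (forall X X', A X = A X' -> X i0 = X' i0 -> X i1 = X' i1 ->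
     \sum_i X i = \sum_i X' i) ->
 (3 * k <= 2 * l)%N.
Proof.
move=> hG La Lb T3 T2 T1.
pose f (t : 'rV[G]_k * 'rV[G]_k * 'rV[G]_k) :=
  (A (mk3 t.1.1 t.1.2 t.2), B (mk3 t.1.1 t.1.2 t.2)).
have finj : injective f.
  move=> [[x1 x2] x3] [[x1' x2'] x3'] /= [hA hB].
  have hs := T3 _ _ hA hB; rewrite !sum3 /mk3 /= in hs.
  have hh := Lb (mk3 x1' x2' x3') (mk3 x1 x2' x3') erefl erefl.
  have hW := T2 (mk3 x1 x2 x3) (mk3 x1 x2' x3') (etrans hB hh) erefl.
  rewrite !sum3 /mk3 /= in hW.
  have e1 : x1 = x1'.
    apply: (@addIr _ (x2' + x3')); rewrite !addrA -hW hs; done.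
  subst x1'.
  have hV := T1 (mk3 x1 x2 x3) (mk3 x1 x2 x3') _ erefl erefl.
  rewrite !sum3 /mk3 /= in hV.
  have e3 : x3 = x3'.
    apply: (@addrI _ (x1 + x2)); apply: hV.
    by rewrite hA; apply: La.
  subst x3'.
  have e2 : x2 = x2' by apply: (@addIr _ x3); apply: (@addrI _ x1); rewrite !addrA.
  by subst x2'.
have := leq_card f finj.
rewrite !card_prod !card_mx -!expnD.
by rewrite leq_exp2l // !mul1n -!addnA !mul2n -addnn !mulSn mul0n addn0 addnA.
Qed.

Set Implicit Arguments. Unset Strict Implicit.

Definition solves (N : network) (A : zmodType) (k l : nat)
  (c : frac_code N A k l) (y : messages N A k -> edge N -> 'rV[A]_l) :=
  forall X : messages N A k,
    (forall (e : edge N) (i : 'I_(size (sources N))),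
        Defs.tail e = src i -> y X e = enc c e (X i)) /\
    (forall e : edge N, Defs.tail e \notin sources N ->
        y X e = fn c e (in_vals (Defs.tail e) (y X))) /\
    (forall j : 'I_(size (terminals N)),
        dec c j (in_vals (term j) (y X)) = \sum_i X i).

Section Gen.
Variables (N : network) (A : zmodType) (k l : nat) (c : frac_code N A k l)
  (y : messages N A k -> edge N -> 'rV[A]_l) (hy : solves c y).

Lemma in_vals_eq v (z z' : edge N -> 'rV[A]_l) :
  (forall e, Defs.head e == v -> z e = z' e) -> in_vals v z = in_vals v z'.
Proof. by move=> h; apply/ffunP=> e; rewrite !ffunE; case: ifP => // /h ->. Qed.

Lemma srcE (X X' : messages N A k) (e : edge N) (i : 'I_(size (sources N))) : Defs.tail e = src i -> X i = X' i -> y X e = y X' e.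
Proof. by move=> ht hX; have [h _] := hy X; have [h' _] := hy X'; rewrite (h e i ht) (h' e i ht) hX. Qed.

Lemma intE (X X' : messages N A k) (e : edge N) : Defs.tail e \notin sources N ->
  (forall e', Defs.head e' == Defs.tail e -> y X e' = y X' e') -> y X e = y X' e.
Proof.
move=> ht h; have [_ [g _]] := hy X; have [_ [g' _]] := hy X'.
by rewrite g // g' //; congr (fn c e _); apply: in_vals_eq.
Qed.

Lemma termE (X X' : messages N A k) (j : 'I_(size (terminals N))) :
  (forall e', Defs.head e' == term j -> y X e' = y X' e') -> \sum_i X i = \sum_i X' i.
Proof.
move=> h; have [_ [_ g]] := hy X; have [_ [_ g']] := hy X'.
by rewrite -(g j) -(g' j); congr (dec c j _); apply: in_vals_eq. Qed.
End Gen.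

Notation "'E3' m" := (@Ordinal (size (edges S3)) m isT) (at level 0, m at level 0).

Lemma edge_casesS3 (P : edge S3 -> Prop) :
  P (E3 0) -> P (E3 1) -> P (E3 2) -> P (E3 3) -> P (E3 4) -> P (E3 5) ->
  P (E3 6) -> P (E3 7) -> P (E3 8) -> P (E3 9) -> P (E3 10) -> P (E3 11) ->
  forall e, P e.
Proof.
move=> p0 p1 p2 p3 p4 p5 p6 p7 p8 p9 p10 p11 [m hm].
do 12 (case: m hm => [|m] hm; first by
  match goal with |- P (Ordinal (m:=?n) _) => have -> : Ordinal hm = E3 n by apply: val_inj end).
by [].
Qed.


Ltac srcT hy := first
  [ (apply: (srcE hy (i := i0)); [by [] | assumption])
  | (apply: (srcE hy (i := i1)); [by [] | assumption])
  | (apply: (srcE hy (i := i2)); [by [] | assumption]) ].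

Section S3sec.
Variables (G : zmodType) (k l : nat) (c : frac_code S3 G k l)
  (y : messages S3 G k -> edge S3 -> 'rV[G]_l) (hy : solves c y).

Ltac ec := apply: edge_casesS3; rewrite /Defs.head /Defs.tail /=; try done.

Lemma La3 (X X' : messages S3 G k) : X i0 = X' i0 -> X i2 = X' i2 ->
  y X (E3 2) = y X' (E3 2).
Proof.
move=> h0 h2; apply: (intE hy) => //; ec; move=> _; srcT hy.
Qed.

Ltac inner := move=> _; first [assumption | srcT hy | (apply: (intE hy) => //; ec; move=> _; first [assumption | srcT hy])].

Lemma Lb3 (X X' : messages S3 G k) : X i1 = X' i1 -> X i2 = X' i2 ->
  y X (E3 7) = y X' (E3 7).
Proof. move=> h0 h2; apply: (intE hy) => //; ec; inner. Qed.

Lemma T33 (X X' : messages S3 G k) : y X (E3 2) = y X' (E3 2) -> y X (E3 7) = y X' (E3 7) ->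
  \sum_i X i = \sum_i X' i.
Proof. move=> hA hB; apply: (termE hy (j := i2)); ec; inner. Qed.

Lemma T23 (X X' : messages S3 G k) : y X (E3 7) = y X' (E3 7) -> X i0 = X' i0 ->
  \sum_i X i = \sum_i X' i.
Proof. move=> hB h0; apply: (termE hy (j := i1)); ec; inner. Qed.

Lemma T13 (X X' : messages S3 G k) : y X (E3 2) = y X' (E3 2) -> X i0 = X' i0 -> X i1 = X' i1 ->
  \sum_i X i = \sum_i X' i.
Proof. move=> hA h0 h1; apply: (termE hy (j := i0)); ec; inner. Qed.
End S3sec.

Notation "'E3'' m" := (@Ordinal (size (edges S3')) m isT) (at level 0, m at level 0).

Lemma edge_casesS3' (P : edge S3' -> Prop) :
  P (E3' 0) -> P (E3' 1) -> P (E3' 2) -> P (E3' 3) -> P (E3' 4) -> P (E3' 5) ->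
  P (E3' 6) -> P (E3' 7) -> P (E3' 8) -> P (E3' 9) -> P (E3' 10) -> P (E3' 11) ->
  P (E3' 12) -> P (E3' 13) -> P (E3' 14) ->
  forall e, P e.
Proof.
move=> p0 p1 p2 p3 p4 p5 p6 p7 p8 p9 p10 p11 p12 p13 p14 [m hm].
do 15 (case: m hm => [|m] hm; first by
  match goal with |- P (Ordinal (m:=?n) _) => have -> : Ordinal hm = E3' n by apply: val_inj end).
by [].
Qed.

Section S3'sec.
Variables (G : zmodType) (k l : nat) (c : frac_code S3' G k l)
  (y : messages S3' G k -> edge S3' -> 'rV[G]_l) (hy : solves c y).

Ltac ec := apply: edge_casesS3'; rewrite /Defs.head /Defs.tail /=; try done.
Ltac inner := move=> _; first [assumption | srcT hy | (apply: (intE hy) => //; ec; move=> _; first [assumption | srcT hy])].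

Lemma La3' (X X' : messages S3' G k) : X i0 = X' i0 -> X i2 = X' i2 ->
  y X (E3' 2) = y X' (E3' 2).
Proof. move=> h0 h2; apply: (intE hy) => //; ec; inner. Qed.

Lemma Lb3' (X X' : messages S3' G k) : X i1 = X' i1 -> X i2 = X' i2 ->
  y X (E3' 7) = y X' (E3' 7).
Proof. move=> h0 h2; apply: (intE hy) => //; ec; inner. Qed.

Lemma T33' (X X' : messages S3' G k) : y X (E3' 2) = y X' (E3' 2) -> y X (E3' 7) = y X' (E3' 7) ->
  \sum_i X i = \sum_i X' i.
Proof. move=> hA hB; apply: (termE hy (j := i2)); ec; inner. Qed.

Lemma T23' (X X' : messages S3' G k) : y X (E3' 7) = y X' (E3' 7) -> X i0 = X' i0 ->
  \sum_i X i = \sum_i X' i.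
Proof. move=> hB h0; apply: (termE hy (j := i1)); ec; inner. Qed.

Lemma T13' (X X' : messages S3' G k) : y X (E3' 2) = y X' (E3' 2) -> X i0 = X' i0 -> X i1 = X' i1 ->
  \sum_i X i = \sum_i X' i.
Proof. move=> hA h0 h1; apply: (termE hy (j := i0)); ec; inner. Qed.
End S3'sec.

Lemma rate_bound (G : finZmodType) : (1 < #|G|)%N ->
  forall N : network, N = S3 \/ N = S3' ->
  forall k l : nat, (0 < l)%N -> achievable N G k l -> (3 * k <= 2 * l)%N.
Proof.
move=> hG N [->|->] k l _ [c [y hy]].
- exact: (@core _ k l (fun X => y X (E3 2)) (fun X => y X (E3 7)) hG
    (La3 hy) (Lb3 hy) (T33 hy) (T23 hy) (T13 hy)).
- exact: (@core _ k l (fun X => y X (E3' 2)) (fun X => y X (E3' 7)) hG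
    (La3' hy) (Lb3' hy) (T33' hy) (T23' hy) (T13' hy)).
Qed.

Lemma rate_rat (k l : nat) : (0 < l)%N -> (3 * k <= 2 * l)%N ->
  (k%:R / l%:R : rat) <= 2%:R / 3%:R.
Proof.
move=> hl h; rewrite ler_pdivrMr ?ltr0n // mulrAC ler_pdivlMr ?ltr0n //.
by rewrite -!natrM ler_nat mulnC.
Qed.


Section Code.
Variable F : fieldType.

Definition mat (m n : nat) (t : seq (seq F)) : 'M[F]_(m, n) :=
  \matrix_(i < m, j < n) nth 0 (nth [::] t i) j.

Definition Pm := mat 2 3 [:: [:: 1; 0; 0]; [:: 0; 1; 0]].
Definition Am := mat 2 3 [:: [:: 1; 0; 1]; [:: 0; 1; 0]].
Definition Bm := mat 2 3 [:: [:: 0; 0; -1]; [:: 1; 1; 1]].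
Definition D1 := mat 3 2 [:: [:: 1; 0]; [:: 0; 1]; [:: 0; 0]].
Definition D2 := mat 3 2 [:: [:: 1; 0]; [:: 0; 1]; [:: -1; 0]].
Definition D3 := mat 3 2 [:: [:: 1; 0]; [:: 0; 1]; [:: -1; -1]].

Ltac mxcomp := apply/matrixP => - [[|[|?]] ?] [[|[|?]] ?]; rewrite !mxE !big_ord_recl !big_ord0 !mxE //=;
  rewrite ?(mulr0, mul0r, mulr1, mul1r, addr0, add0r, mulrN1, mulN1r, opprK, subrr, addrN, addNr) //.

Lemma PD1 : Pm *m D1 = 1%:M. Proof. mxcomp. Qed.
Lemma AD1 : Am *m D1 = 1%:M. Proof. mxcomp. Qed.
Lemma PD2 : Pm *m D2 = 1%:M. Proof. mxcomp. Qed.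
Lemma BD2 : Bm *m D2 = 1%:M. Proof. mxcomp. Qed.
Lemma PD3 : Pm *m D3 = 1%:M. Proof. mxcomp. Qed.
Lemma ABD3 : Am *m D3 + Bm *m D3 = 1%:M. Proof. mxcomp. Qed.

Definition Msel (m : nat) : 'M[F]_(2,3) :=
  if m == 1%N then Am else if m == 6%N then Bm else Pm.

Definition encC (N : network) (e : edge N) (x : 'rV[F]_2) : 'rV[F]_3 := x *m Msel (val e).

Definition fnS3 (e : edge S3) (w : {ffun edge S3 -> 'rV[F]_3}) : 'rV[F]_3 :=
  if val e == 2%N then w (E3 0) + w (E3 1)
  else if (val e == 3%N) || (val e == 4%N) then w (E3 2)
  else if val e == 7%N then w (E3 5) + w (E3 6) else w (E3 7).

Definition decS3 (j : 'I_(size (terminals S3))) (w : {ffun edge S3 -> 'rV[F]_3}) : 'rV[F]_2 :=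
  if val j == 0%N then (w (E3 3) + w (E3 10)) *m D1
  else if val j == 1%N then (w (E3 8) + w (E3 11)) *m D2
  else (w (E3 4) + w (E3 9)) *m D3.

Definition codeS3 : frac_code S3 F 2 3 := FracCode (@encC S3) fnS3 decS3.

Definition yS3 (X : messages S3 F 2) (e : edge S3) : 'rV[F]_3 :=
  let u1 := X i0 *m Pm in let a3 := X i2 *m Am in let a := u1 + a3 in
  let u2 := X i1 *m Pm in let b3 := X i2 *m Bm in let b := u2 + b3 in
  nth 0 [:: u1; a3; a; a; a; u2; b3; b; b; b; u2; u1] (val e).

Lemma cases3 (P : 'I_3 -> Prop) : P i0 -> P i1 -> P i2 -> forall i, P i.
Proof.
move=> p0 p1 p2 [m hm].
do 3 (case: m hm => [|m] hm; first by
  match goal with |- P (Ordinal (m:=?n) _) => have -> : Ordinal hm = @Ordinal 3 n isT by apply: val_inj end).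
by [].
Qed.

Lemma lin_mx m n p (M : 'M[F]_(n,p)) : is_linear_map (fun x : 'M[F]_(m,n) => x *m M).
Proof. by move=> a x z; rewrite mulmxDl scalemxAl. Qed.

Lemma codeS3_sol : solves codeS3 yS3.
Proof.
move=> X; split; [|split].
- apply: edge_casesS3; apply: cases3; rewrite /Defs.tail /src /=; by [].
- apply: edge_casesS3; rewrite /Defs.tail /= //; rewrite /fnS3 /in_vals /= ?ffunE /Defs.head /=; by [].
- apply: cases3; rewrite /term /= /decS3 /in_vals /= ?ffunE /Defs.head /= /yS3 /= sum3.
  + by rewrite !mulmxDl -!mulmxA PD1 AD1 !mulmx1 addrAC.
  + by rewrite !mulmxDl -!mulmxA PD2 BD2 !mulmx1 addrC addrA.
  + rewrite !mulmxDl -!mulmxA PD3 !mulmx1 addrACA -mulmxDr ABD3 mulmx1.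
    by rewrite addrAC.
Qed.

Lemma codeS3_lin : is_linear_code codeS3.
Proof.
split; [|split].
- by move=> e; apply: lin_mx.
- move=> e a w w'; rewrite /= /fnS3.
  by repeat case: ifP => _; rewrite ?ffunE // scalerDr addrACA.
- move=> j a w w'; rewrite /= /decS3.
  by repeat case: ifP => _; rewrite ?ffunE /= addrACA -scalerDr mulmxDl scalemxAl.
Qed.

Definition fnS3' (e : edge S3') (w : {ffun edge S3' -> 'rV[F]_3}) : 'rV[F]_3 :=
  if val e == 2%N then w (E3' 0) + w (E3' 1)
  else if (val e == 3%N) || (val e == 4%N) then w (E3' 2)
  else if val e == 7%N then w (E3' 5) + w (E3' 6)
  else if val e == 13%N then w (E3' 12) else w (E3' 7).

Definition decS3' (j : 'I_(size (terminals S3'))) (w : {ffun edge S3' -> 'rV[F]_3}) : 'rV[F]_2 :=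
  if val j == 0%N then (w (E3' 3) + w (E3' 13)) *m D1
  else if val j == 1%N then (w (E3' 8) + w (E3' 10)) *m D2
  else (w (E3' 4) + w (E3' 9)) *m D3.

Definition codeS3' : frac_code S3' F 2 3 := FracCode (@encC S3') fnS3' decS3'.

Definition yS3' (X : messages S3' F 2) (e : edge S3') : 'rV[F]_3 :=
  let u1 := X i0 *m Pm in let a3 := X i2 *m Am in let a := u1 + a3 in
  let u2 := X i1 *m Pm in let b3 := X i2 *m Bm in let b := u2 + b3 in
  nth 0 [:: u1; a3; a; a; a; u2; b3; b; b; b; u1; u1; u2; u2; u1] (val e).

Lemma codeS3'_sol : solves codeS3' yS3'.
Proof.
move=> X; split; [|split].
- apply: edge_casesS3'; apply: cases3; rewrite /Defs.tail /src /=; by [].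
- apply: edge_casesS3'; rewrite /Defs.tail /= //; rewrite /fnS3' /in_vals /= ?ffunE /Defs.head /=; by [].
- apply: cases3; rewrite /term /= /decS3' /in_vals /= ?ffunE /Defs.head /= /yS3' /= sum3.
  + by rewrite !mulmxDl -!mulmxA PD1 AD1 !mulmx1 addrAC.
  + by rewrite !mulmxDl -!mulmxA PD2 BD2 !mulmx1 addrC addrA.
  + rewrite !mulmxDl -!mulmxA PD3 !mulmx1 addrACA -mulmxDr ABD3 mulmx1.
    by rewrite addrAC.
Qed.

Lemma codeS3'_lin : is_linear_code codeS3'.
Proof.
split; [|split].
- by move=> e; apply: lin_mx.
- move=> e a w w'; rewrite /= /fnS3'.
  by repeat case: ifP => _; rewrite ?ffunE // scalerDr addrACA.
- move=> j a w w'; rewrite /= /decS3'.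
  by repeat case: ifP => _; rewrite ?ffunE /= addrACA -scalerDr mulmxDl scalemxAl.
Qed.
End Code.

Theorem mainTheorem5 :
  (forall (G : finZmodType), (1 < #|G|)%N ->
     forall N : network, N = S3 \/ N = S3' ->
     forall k l : nat, (0 < l)%N -> achievable N G k l ->
       (k%:R / l%:R : rat) <= 2%:R / 3%:R) /\
  (forall (F : finFieldType) (N : network), N = S3 \/ N = S3' ->
     is_sup_rate (achievable N F) (2%:R / 3%:R) /\
     is_sup_rate (linearly_achievable N F) (2%:R / 3%:R)).
Proof.
split.
  move=> G hG N hN k l hl hach.
  exact: (rate_rat hl (rate_bound hG hN hl hach)).
move=> F N hN.
have ub : forall k l : nat, (0 < l)%N -> achievable N F k l ->
    (k%:R / l%:R : rat) <= 2%:R / 3%:R.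
  move=> k l hl hach.
  exact: (rate_rat hl (rate_bound (finNzRing_gt1 F) hN hl hach)).
have lach : linearly_achievable N F 2 3.
  case: hN => ->.
  - exists (codeS3 F); split; first exact: codeS3_lin.
    exists (@yS3 F); exact: codeS3_sol.
  - exists (codeS3' F); split; first exact: codeS3'_lin.
    exists (@yS3' F); exact: codeS3'_sol.
have ach : achievable N F 2 3.
  by case: lach => c [_ hs]; exists c.
split; split.
- exact: ub.
- by move=> d hd; apply: (hd 2%N 3%N isT ach).
- by move=> k l hl [c [_ hs]]; apply: ub => //; exists c.
- by move=> d hd; apply: (hd 2%N 3%N isT lach).
Qed.
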